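(* Let $\mathcal{X}$ be a feature space, $\mathcal{Y}\subseteq\mathbb{R}$, and $\ell:\mathbb{R}\times\mathcal{Y}\to\mathbb{R}_+$ a loss. For a distribution $P_{XY}$ on $\mathcal{X}\times\mathcal{Y}$ and $g:\mathcal{X}\to\mathbb{R}$ put $\mathcal{R}(g,P_{XY})=\mathbb{E}_{(X,Y)\sim P_{XY}}[\ell(g(X),Y)]$ and $\mathcal{R}^*(P_{XY}):=\min_{g:\mathcal{X}\to\mathbb{R}}\mathcal{R}(g,P_{XY})$ (the Bayes risk). Let $\mu$ be a distribution on the set $\mathfrak{P}_{\mathcal{X}\times\mathcal{Y}}$ of probability distributions on $\mathcal{X}\times\mathcal{Y}$ such that, $\mu$-almost surely, $P_{Y|X}=F(P_X)$ for some deterministic mapping $F$ (i.e. the posterior is a function of the marginal). Let $f^*:\mathfrak{P}_{\mathcal{X}}\times\mathcal{X}\to\mathbb{R}$ be a minimizer of $$\mathcal{E}(f,\infty):=\mathbb{E}_{P_{XY}\sim\mu}\,\mathbb{E}_{(X,Y)\sim P_{XY}}\big[\ell(f(P_X,X),Y)\big].$$ Then for $\mu$-almost all $P_{XY}$, $\mathcal{R}(f^*(P_X,\cdot),P_{XY})=\mathcal{R}^*(P_{XY})$, and $\mathcal{E}(f^*,\infty)=\mathbb{E}_{P_{XY}\sim\mu}[\mathcal{R}^*(P_{XY})]$.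
   Context: $\mathfrak{P}_{\mathcal{X}}$ denotes the set of probability distributions on $\mathcal{X}$. Every $P_{XY}\in\mathfrak{P}_{\mathcal{X}\times\mathcal{Y}}$ is disintegrated as $P_{XY}=P_X\bullet P_{Y|X}$ with marginal $P_X$ and posterior (conditional distribution of $Y$ given $X$) $P_{Y|X}$ ($\mathcal{X}$ is assumed regular enough, e.g. Polish, for this to exist). $\mathfrak{P}_{\mathcal{X}\times\mathcal{Y}}$ carries the topology of weak convergence and its Borel $\sigma$-algebra. *)

(* Defs.v *)
From HB Require Import structures.
From mathcomp Require Import all_boot all_order all_algebra.
From mathcomp Require Import all_classical all_reals all_analysis.
From mathcomp Require Import measurable_realfun.

Set Implicit Arguments.
Unset Strict Implicit.
Unset Printing Implicit Defensive.

Import Order.TTheory GRing.Theory Num.Theory.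
Local Open Scope classical_set_scope.
Local Open Scope ring_scope.

Section marginal.
Context d1 d2 (X : measurableType d1) (Y : measurableType d2) (R : realType).
Variable P : probability (X * Y)%type R.

Definition marginal : set X -> \bar R := fun A => P (fst @^-1` A).

Let mpre (A : set X) : measurable A -> measurable (fst @^-1` A : set (X * Y)).
Proof.
move=> mA; rewrite -[X in measurable X]setTI.
exact: (@measurable_fst _ _ X Y) mA.
Qed.

Let marginal0 : marginal set0 = 0%E.
Proof. by rewrite /marginal preimage_set0 measure0. Qed.

Let marginal_ge0 A : (0 <= marginal A)%E.
Proof. exact: measure_ge0. Qed.

Let marginal_sigma_additive : semi_sigma_additive marginal.
Proof.
move=> F mF tF mUF; rewrite /marginal preimage_bigcup.
apply: measure_semi_sigma_additive.
- by move=> n; exact: mpre.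
- apply/trivIsetP => /= i j _ _ ij; rewrite -preimage_setI.
  by move/trivIsetP : tF => /(_ _ _ _ _ ij) ->//; rewrite preimage_set0.
- by rewrite -preimage_bigcup; exact: mpre.
Qed.

HB.instance Definition _ := isMeasure.Build _ _ _ marginal
  marginal0 marginal_ge0 marginal_sigma_additive.

Let marginal_setT : marginal [set: X] = 1%E.
Proof. by rewrite /marginal preimage_setT probability_setT. Qed.

HB.instance Definition _ := Measure_isProbability.Build _ _ _ marginal marginal_setT.

End marginal.

Local Open Scope ereal_scope.

Definition risk d1 d2 (X : measurableType d1) (Y : measurableType d2)
  (R : realType) (ell : R -> Y -> R) (g : X -> R)
  (P : probability (X * Y)%type R) : \bar R :=
  \int[P]_z (ell (g z.1) z.2)%:E.

Definition bayes_risk d1 d2 (X : measurableType d1) (Y : measurableType d2)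
  (R : realType) (ell : R -> Y -> R) (P : probability (X * Y)%type R) : \bar R :=
  ereal_inf [set risk ell g P | g in [set g : X -> R | measurable_fun setT g]].

Definition meta_risk d1 d2 (X : measurableType d1) (Y : measurableType d2)
  (R : realType) (ell : R -> Y -> R)
  (mu : probability (pprobability (X * Y)%type R) R)
  (f : probability X R -> X -> R) : \bar R :=
  \int[mu]_P risk ell (f (marginal P)) P.

Definition is_posterior d1 d2 (X : measurableType d1) (Y : measurableType d2)
  (R : realType) (P : probability (X * Y)%type R) (K : X -> probability Y R) : Prop :=
  (forall B, measurable B -> measurable_fun setT (fun x => K x B)) /\
  (forall A B, measurable A -> measurable B ->
     P (A `*` B) = \int[marginal P]_(x in A) K x B).

(* Main.v *)
Require Import Defs.
From HB Require Import structures.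
From mathcomp Require Import all_boot all_order all_algebra.
From mathcomp Require Import all_classical all_reals all_analysis.
From mathcomp Require Import measurable_realfun.
Import Order.TTheory GRing.Theory Num.Theory.
Local Open Scope classical_set_scope.
Local Open Scope ereal_scope.
Import HBNNSimple.
Section lower.
Context d (T : measurableType d) (R : realType) (mu : {measure set T -> \bar R}%R).

Lemma lower_le (g u : T -> \bar R) :
  (forall x, 0 <= g x) -> (forall x, g x <= u x) ->
  \int[mu]_x g x <= \int[mu]_x u x.
Proof.
move=> g0 gu; have u0 x : 0 <= u x by exact: le_trans (gu x).
rewrite !ge0_integralTE//.
apply: le_ereal_sup => _ [h hg <-]; exists h => // x; exact: le_trans (hg x) (gu x).
Qed.

Lemma lower_le_ae (g u : T -> \bar R) (N : set T) : measurable N -> mu N = 0 ->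
  (forall x, 0 <= g x) -> (forall x, 0 <= u x) -> (forall x, ~ N x -> g x <= u x) ->
  \int[mu]_x g x <= \int[mu]_x u x.
Proof.
move=> mN N0 g0 u0 gu.
rewrite [X in X <= _]ge0_integralTE//.
apply: ge_ereal_sup => _ [h hg <-].
have mh : measurable_fun setT (EFin \o h) by apply/measurable_EFinP; exact: measurable_funPT.
rewrite -integralT_nnsfun (ge0_negligible_integral mN _ _ _ N0)//; last first.
  by move=> x _; rewrite lee_fin.
rewrite integral_mkcond; apply: lower_le.
  by move=> x; rewrite /patch; case: ifP => // _; rewrite lee_fin.
move=> x; rewrite /patch; case: ifPn => // /set_mem [_ nN].
exact: le_trans (hg x) (gu x nN).
Qed.


Lemma lower_ae_eq (v b : T -> \bar R) : measurable_fun setT v ->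
  (forall x, 0 <= b x) -> (forall x, b x <= v x) -> \int[mu]_x v x < +oo ->
  \int[mu]_x v x <= \int[mu]_x b x -> {ae mu, forall x, v x = b x}.
Proof.
move=> mv b0 bv vfin vb.
have v0 x : 0 <= v x by exact: le_trans (bv x).
have I0 : 0 <= \int[mu]_x v x by exact: integral_ge0.
have Ifin : \int[mu]_x v x \is a fin_num by rewrite ge0_fin_numE.
have hex n : exists h : {nnsfun T >-> R}, (forall x, (h x)%:E <= b x) /\
    \int[mu]_x v x - (n.+1%:R^-1)%:E < sintegral mu h.
  have : \int[mu]_x v x - (n.+1%:R^-1)%:E < ereal_sup [set sintegral mu h |
      h in [set h : {nnsfun T >-> R} | forall x, (h x)%:E <= b x]].
    rewrite -ge0_integralTE//; apply: lt_le_trans vb.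
    by rewrite gte_subl// lte_fin invr_gt0.
  by move=> /ereal_sup_gt [_ [h hb <-] hlt]; exists h.
have /choice [h hh] := hex.
pose H x := esups (fun n => (h n x)%:E) 0%N.
have mH : measurable_fun setT H.
  apply: (measurable_fun_esups (f := fun n x => (h n x)%:E)) => n.
  by apply/measurable_EFinP; exact: measurable_funPT.
have hH n x : (h n x)%:E <= H x by apply: ereal_sup_ubound; exists n.
have Hb x : H x <= b x by apply: ge_ereal_sup => _ [n _ <-]; exact: (hh n).1.
have H0 x : 0 <= H x by apply: le_trans (hH 0%N x); rewrite lee_fin.
have IH : \int[mu]_x v x <= \int[mu]_x H x.
  apply/lee_subgt0Pr => e e0.
  have [k hk] := ltr_add_invr e0; rewrite add0r in hk.
  apply: (@le_trans _ _ (\int[mu]_x v x - (k.+1%:R^-1)%:E)).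
    by apply: leeB => //; rewrite lee_fin ltW.
  apply: le_trans (ltW (hh k).2) _.
  rewrite -integralT_nnsfun; apply: ge0_le_integral => //.
  - by move=> x _; rewrite lee_fin.
  - by apply/measurable_EFinP; exact: measurable_funPT.
have HI : \int[mu]_x H x <= \int[mu]_x v x.
  apply: ge0_le_integral => //.
  all: try by move=> x _.
  by move=> x _; exact: le_trans (Hb x) (bv x).
have vi : mu.-integrable setT v.
  apply/integrableP; split => //.
  by rewrite (eq_integral v)// => x _; rewrite gee0_abs.
have ae : ae_eq mu setT v H.
  apply: integral_ae_eq => // E _ mE.
  have mCE : measurable (~` E) by exact: measurableC.
  have dE : [disjoint E & ~` E] by rewrite disj_set2E setICr.
  have split (f : T -> \bar R) : measurable_fun setT f -> (forall x, 0 <= f x) ->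
      \int[mu]_x f x = \int[mu]_(x in E) f x + \int[mu]_(x in ~` E) f x.
    move=> mf f0; have := ge0_integral_setU mu mE mCE (f:=f); rewrite setUv => -> //.
  have aE : \int[mu]_(x in E) H x <= \int[mu]_(x in E) v x.
    { apply: ge0_le_integral => //.
    all: try exact: measurable_funS mH.
    all: try exact: measurable_funS mv.
    all: by move=> x _; try exact: le_trans (Hb x) (bv x). }
  have bE : \int[mu]_(x in ~` E) H x <= \int[mu]_(x in ~` E) v x.
    { apply: ge0_le_integral => //.
    all: try exact: measurable_funS mH.
    all: try exact: measurable_funS mv.
    all: by move=> x _; try exact: le_trans (Hb x) (bv x). }
  have dfin : \int[mu]_(x in ~` E) v x \is a fin_num.
    rewrite ge0_fin_numE; last by apply: integral_ge0.
    apply: le_lt_trans vfin.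
    by apply: ge0_subset_integral.
  apply/le_anti; rewrite aE andbT leNgt; apply/negP => ac.
  have : \int[mu]_x H x < \int[mu]_x v x.
    rewrite (split H)// (split v)//.
    apply: (@le_lt_trans _ _ (\int[mu]_(x in E) H x + \int[mu]_(x in ~` E) v x)).
      by apply: leeD.
    by rewrite lteD2rE.
  by rewrite ltNge IH.
apply: filterS ae => x /(_ I) vH.
by apply/le_anti; rewrite bv /= vH Hb.
Qed.

End lower.
Arguments lower_le {d T R mu}.
Arguments lower_le_ae {d T R mu}.
Arguments lower_ae_eq {d T R mu}.

Section post.
Context d1 d2 (X : measurableType d1) (Y : measurableType d2) (R : realType).

Lemma post_unique (P1 P2 : probability (X * Y)%type R) (K : X -> probability Y R) :
  marginal P1 = marginal P2 -> is_posterior P1 K -> is_posterior P2 K ->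
  forall A, measurable A -> P1 A = P2 A.
Proof.
move=> eM [_ h1] [_ h2] A mA.
apply: (measure_unique [set A `*` B | A in measurable & B in measurable] (fun _ => setT)) => //.
- by rewrite measurable_prod_measurableType.
- move=> _ _ [A1 mA1 [B1 mB1 <-]] [A2 mA2 [B2 mB2 <-]]; rewrite -setXI.
  exists (A1 `&` A2); first exact: measurableI.
  by exists (B1 `&` B2) => //; exact: measurableI.
- by move=> _; exists setT => //; exists setT => //; rewrite setXTT.
- by rewrite bigcup_const.
- move=> _ [A1 mA1 [B1 mB1 <-]].
  apply: (etrans (h1 _ _ mA1 mB1)); apply: (etrans _ (esym (h2 _ _ mA1 mB1))).
  by rewrite eM.
- by move=> _; exact: (le_lt_trans (probability_le1 _ measurableT) (ltry _)).
Qed.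

Lemma risk_eq (ell : R -> Y -> R) (g : X -> R) (P1 P2 : probability (X * Y)%type R) :
  (forall A, measurable A -> P1 A = P2 A) -> risk ell g P1 = risk ell g P2.
Proof.
move=> h; rewrite /risk; apply: eq_measure_integral => A mA _; exact: (h A mA).
Qed.

Lemma bayes_eq (ell : R -> Y -> R) (P1 P2 : probability (X * Y)%type R) :
  (forall A, measurable A -> P1 A = P2 A) -> bayes_risk ell P1 = bayes_risk ell P2.
Proof.
move=> h; rewrite /bayes_risk; congr ereal_inf.
by apply: eq_imagel => g _; exact: risk_eq.
Qed.

End post.
Arguments post_unique {d1 d2 X Y R P1 P2 K}.
Arguments risk_eq {d1 d2 X Y R} ell g {P1 P2}.
Arguments bayes_eq {d1 d2 X Y R} ell {P1 P2}.

Theorem lemma3p1 (d1 d2 : measure_display) (X : measurableType d1)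
  (Y : measurableType d2) (R : realType)
  (ell : R -> Y -> R)
  (ell_ge0 : forall t y, (0 <= ell t y)%R)
  (ell_meas : measurable_fun setT (fun p : R * Y => ell p.1 p.2))
  (mu : probability (pprobability (X * Y)%type R) R)
  (F : probability X R -> X -> probability Y R)
  (hF : {ae mu, forall P : pprobability (X * Y)%type R,
          is_posterior P (F (marginal P))})
  (bayes_attained : forall P : probability (X * Y)%type R,
     exists g : X -> R, measurable_fun setT g /\ risk ell g P = bayes_risk ell P)
  (fstar : probability X R -> X -> R)
  (fstar_meas : forall Q, measurable_fun setT (fstar Q))
  (fstar_min : forall f : probability X R -> X -> R,
     (forall Q, measurable_fun setT (f Q)) ->
     meta_risk ell mu fstar <= meta_risk ell mu f)
  (fstar_finite : meta_risk ell mu fstar < +oo)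
  (fstar_risk_meas : measurable_fun setT
     (fun P : pprobability (X * Y)%type R => risk ell (fstar (marginal P)) P)) :
  {ae mu, forall P : pprobability (X * Y)%type R,
     risk ell (fstar (marginal P)) P = bayes_risk ell P} /\
  meta_risk ell mu fstar = \int[mu]_P bayes_risk ell P.
Proof.
case: hF => N0 [mN0 N00 subN].
pose good (Q : probability X R) (P : probability (X * Y)%type R) :=
  marginal P = Q /\ is_posterior P (F Q).
pose f (Q : probability X R) : X -> R :=
  match pselect (exists P, good Q P) with
  | left e => projT1 (cid (bayes_attained (projT1 (cid e))))
  | right _ => fstar Q
  end.
have fm Q : measurable_fun setT (f Q).
  rewrite /f; case: pselect => [e|_]; last exact: fstar_meas.
  by case: (cid (bayes_attained _)) => g [].
have risk0 g (P : probability (X * Y)%type R) : 0 <= risk ell g P.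
  by apply: integral_ge0 => z _; rewrite lee_fin.
have E1 (P : pprobability (X * Y)%type R) : ~ N0 P ->
    risk ell (f (marginal P)) P = bayes_risk ell P.
  move=> nP.
  have gP : is_posterior P (F (marginal P)).
    by apply: contrapT => h; apply: nP; apply: subN.
  rewrite /f; case: pselect => [e|ne]; last by exfalso; apply: ne; exists P.
  case: (cid e) => P' [eM hP'] /=.
  case: (cid (bayes_attained P')) => g [mg hg] /=.
  have e' := post_unique eM hP' gP.
  rewrite -(risk_eq ell g e') hg; exact: bayes_eq.
have b0 (P : pprobability (X * Y)%type R) : 0 <= bayes_risk ell P.
  by apply/ereal_infP => _ [g _ <-].
have bv (P : pprobability (X * Y)%type R) :
    bayes_risk ell P <= risk ell (fstar (marginal P)) P.
  by apply: ereal_inf_lbound; exists (fstar (marginal P)) => //; exact: fstar_meas.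
have h1 := fstar_min f fm.
have h2 : meta_risk ell mu f <= \int[mu]_P bayes_risk ell P.
  apply: (lower_le_ae _ _ _ mN0 N00) => // P nP.
  by rewrite E1.
have h3 : \int[mu]_P bayes_risk ell P <= meta_risk ell mu fstar.
  by apply: lower_le.
split.
  apply: lower_ae_eq => //.
  exact: le_trans h1 h2.
by apply/le_anti; rewrite h3 andbT (le_trans h1 h2).
Qed.
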